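(* Under Assumption (A), there exists an integer $N$ such that for all $n\ge N$, $\mathbb E_\pi[1/A]\le 2/\delta$, where the expectation is over $x=(A,\mu,\theta_1,\dots,\theta_n)\sim\pi$.
   Context: Fix $V>0$, $a>0$, $b_0>0$. For each $n\ge2$ observed data $Y_1,\dots,Y_n\in\mathbb R$ are given; $\bar Y=\frac1n\sum_iY_i$, $\Delta=\Delta_n=\sum_{i=1}^n(Y_i-\bar Y)^2$. Model: $Y_i\mid\theta_i\sim\mathcal N(\theta_i,V)$, $\theta_i\mid\mu,A\sim\mathcal N(\mu,A)$ independently ($1\le i\le n$), flat prior on $\mu\in\mathbb R$, $A\sim\mathrm{IG}(a,b_0)$ (density $\propto A^{-a-1}e^{-b_0/A}$ on $(0,\infty)$). The posterior $\pi$ on $\mathcal X=(0,\infty)\times\mathbb R\times\mathbb R^n$, $x=(A,\mu,\theta_1,\dots,\theta_n)$, has density $\propto A^{-a-1}e^{-b_0/A}\prod_{i=1}^n A^{-1/2}e^{-(\theta_i-\mu)^2/(2A)}e^{-(Y_i-\theta_i)^2/(2V)}$. Assumption (A): there are $\delta>0$, $M<\infty$ and an integer $N_0$ with $\frac{\Delta_n}{n-1}\le M$ for all $n$ and $\frac{\Delta_n}{n-1}\ge V+\delta$ for all $n\ge N_0$. *)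

(* Defs.v *)
From Stdlib Require Import Reals Lra Lia.
Open Scope R_scope.

Fixpoint sumR (k : nat) (f : nat -> R) : R :=
  match k with O => 0 | S k' => sumR k' f + f k' end.
Fixpoint prodR (k : nat) (f : nat -> R) : R :=
  match k with O => 1 | S k' => prodR k' f * f k' end.

(* Data: Y n i is the i-th observation (i < n) of the n-th data set. *)
Definition Ybar (Y : nat -> nat -> R) (n : nat) : R := sumR n (Y n) / INR n.
Definition DeltaY (Y : nat -> nat -> R) (n : nat) : R :=
  sumR n (fun i => (Y n i - Ybar Y n) ^ 2).

Definition imp_int_R (f : R -> R) (l : R) : Prop :=
  (forall a b, inhabited (Riemann_integrable f a b)) /\
  forall eps, 0 < eps -> exists M, forall a b (pr : Riemann_integrable f a b),
    a <= - M -> M <= b -> Rabs (RiemannInt pr - l) < eps.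

Definition imp_int_pos (f : R -> R) (l : R) : Prop :=
  (forall a b, 0 < a -> a <= b -> inhabited (Riemann_integrable f a b)) /\
  forall eps, 0 < eps -> exists d, 0 < d /\ exists M,
    forall a b (pr : Riemann_integrable f a b),
      0 < a -> a <= d -> M <= b -> Rabs (RiemannInt pr - l) < eps.

Definition upd (th : nat -> R) (j : nat) (t : R) : nat -> R :=
  fun i => if Nat.eqb i j then t else th i.

(* iter_int k F l : the iterated improper integral of F over
   (theta_0, ..., theta_{k-1}) in R^k equals l. *)
Fixpoint iter_int (k : nat) (F : (nat -> R) -> R) (l : R) : Prop :=
  match k with
  | O => F (fun _ => 0) = l
  | S k' => exists g : R -> R,
      (forall t, iter_int k' (fun th => F (upd th k' t)) (g t)) /\ imp_int_R g l
  end.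

(* Integral over X = (0,oo) x R x R^n of F(A, mu, theta), as an iterated
   improper Riemann integral (A outermost, then mu, then theta). *)
Definition post_int (n : nat) (F : R -> R -> (nat -> R) -> R) (l : R) : Prop :=
  exists h : R -> R,
    (forall A, 0 < A -> exists g : R -> R,
        (forall mu, iter_int n (fun th => F A mu th) (g mu)) /\ imp_int_R g (h A))
    /\ imp_int_pos h l.

(* Unnormalised posterior density pi(A, mu, theta_1..theta_n). *)
Definition post_dens (V a b0 : R) (Y : nat -> nat -> R) (n : nat)
    (A mu : R) (th : nat -> R) : R :=
  Rpower A (- a - 1) * exp (- b0 / A) *
  prodR n (fun i => Rpower A (- / 2) * exp (- (th i - mu) ^ 2 / (2 * A))
                    * exp (- (Y n i - th i) ^ 2 / (2 * V))).

(* Main.v *)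
Require Import Defs.
From Stdlib Require Import Reals.
From Stdlib Require Import Lra Lia Classical FunctionalExtensionality.
From Coquelicot Require Import Coquelicot.
Open Scope R_scope.

Lemma expLe x y : x <= y -> exp x <= exp y.
Proof. intros [H|H]; [left; apply exp_increasing; auto | subst; lra]. Qed.

Lemma RI_eq f a b (pr : Riemann_integrable f a b) : RiemannInt pr = RInt f a b.
Proof. symmetry; apply RInt_Reals. Qed.

Lemma exRI (f : R -> R) a b : (forall z, Rmin a b <= z <= Rmax a b -> continuous f z) -> ex_RInt f a b.
Proof. intros H. exact (ex_RInt_continuous (V := R_CompleteNormedModule) f a b H). Qed.

Lemma impR_intro (f : R -> R) l : (forall x, continuous f x) ->
  (forall eps, 0 < eps -> exists M, forall a b, a <= -M -> M <= b -> Rabs (RInt f a b - l) < eps) ->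
  imp_int_R f l.
Proof.
  intros Hc H. split.
  - intros a b. constructor. apply ex_RInt_Reals_0. apply exRI. intros; apply Hc.
  - intros eps Heps. destruct (H eps Heps) as [M HM]. exists M. intros a b pr Ha Hb.
    rewrite RI_eq. auto.
Qed.

Lemma impR_elim (f : R -> R) l : imp_int_R f l ->
  forall eps, 0 < eps -> exists M, forall a b, a <= -M -> M <= b -> Rabs (RInt f a b - l) < eps.
Proof.
  intros [Hi H] eps Heps. destruct (H eps Heps) as [M HM]. exists M. intros a b Ha Hb.
  destruct (Hi a b) as [pr]. rewrite <- (RI_eq _ _ _ pr). auto.
Qed.

Lemma impP_intro (f : R -> R) l : (forall x, 0 < x -> continuous f x) ->
  (forall eps, 0 < eps -> exists d, 0 < d /\ exists M, forall a b, 0 < a -> a <= d -> M <= b ->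
      Rabs (RInt f a b - l) < eps) ->
  imp_int_pos f l.
Proof.
  intros Hc H. split.
  - intros a b Ha Hab. constructor. apply ex_RInt_Reals_0. apply exRI.
    intros z Hz. apply Hc. rewrite Rmin_left in Hz; lra.
  - intros eps Heps. destruct (H eps Heps) as [d [Hd [M HM]]]. exists d; split; auto. exists M.
    intros a b pr Ha Had Hb. rewrite RI_eq. auto.
Qed.

Lemma impP_elim (f : R -> R) l : imp_int_pos f l ->
  forall eps, 0 < eps -> exists d, 0 < d /\ exists M, forall a b, 0 < a -> a <= d -> M <= b -> a <= b ->
      Rabs (RInt f a b - l) < eps.
Proof.
  intros [Hi H] eps Heps. destruct (H eps Heps) as [d [Hd [M HM]]]. exists d; split; auto.
  exists M. intros a b Ha Had Hb Hab.
  destruct (Hi a b Ha Hab) as [pr]. rewrite <- (RI_eq _ _ _ pr). auto.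
Qed.

Lemma impR_unique (f : R -> R) l1 l2 : imp_int_R f l1 -> imp_int_R f l2 -> l1 = l2.
Proof.
  intros H1 H2. apply NNPP; intro Hne.
  assert (Hp : 0 < Rabs (l1 - l2)) by (apply Rabs_pos_lt; lra).
  set (e := Rabs (l1 - l2) / 2).
  assert (He : 0 < e) by (unfold e; lra).
  destruct (impR_elim _ _ H1 e He) as [M1 HM1].
  destruct (impR_elim _ _ H2 e He) as [M2 HM2].
  set (M := Rmax M1 M2).
  assert (M1 <= M) by apply Rmax_l. assert (M2 <= M) by apply Rmax_r.
  assert (A1 := HM1 (-M) M ltac:(lra) ltac:(lra)). assert (A2 := HM2 (-M) M ltac:(lra) ltac:(lra)).
  apply Rabs_def2 in A1. apply Rabs_def2 in A2.
  assert (Rabs (l1 - l2) < 2 * e) by (apply Rabs_def1; lra).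
  unfold e in *; lra.
Qed.

Lemma impP_unique (h1 h2 : R -> R) l1 l2 : (forall x, 0 < x -> h1 x = h2 x) ->
  imp_int_pos h1 l1 -> imp_int_pos h2 l2 -> l1 = l2.
Proof.
  intros Hext H1 H2. apply NNPP; intro Hne.
  assert (Hp : 0 < Rabs (l1 - l2)) by (apply Rabs_pos_lt; lra).
  set (e := Rabs (l1 - l2) / 2).
  assert (He : 0 < e) by (unfold e; lra).
  destruct H1 as [I1 H1]. destruct H2 as [I2 H2].
  destruct (H1 e He) as [d1 [Hd1 [M1 HM1]]]. destruct (H2 e He) as [d2 [Hd2 [M2 HM2]]].
  set (a0 := Rmin d1 d2). set (b0 := Rmax (Rmax M1 M2) a0).
  assert (0 < a0) by (unfold a0; apply Rmin_glb_lt; auto).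
  assert (a0 <= d1) by apply Rmin_l. assert (a0 <= d2) by apply Rmin_r.
  assert (a0 <= b0) by apply Rmax_r.
  assert (M1 <= b0) by (unfold b0; eapply Rle_trans; [apply Rmax_l|apply Rmax_l]).
  assert (M2 <= b0) by (unfold b0; eapply Rle_trans; [apply Rmax_r|apply Rmax_l]).
  destruct (I1 a0 b0 ltac:(auto) ltac:(auto)) as [p1].
  destruct (I2 a0 b0 ltac:(auto) ltac:(auto)) as [p2].
  assert (Heq : RiemannInt p1 = RiemannInt p2).
  { apply RiemannInt_P18; auto. intros x Hx; apply Hext; lra. }
  assert (A1 := HM1 a0 b0 p1 ltac:(auto) ltac:(auto) ltac:(auto)).
  assert (A2 := HM2 a0 b0 p2 ltac:(auto) ltac:(auto) ltac:(auto)).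
  rewrite Heq in A1.
  apply Rabs_def2 in A1. apply Rabs_def2 in A2.
  assert (Rabs (l1 - l2) < 2 * e) by (apply Rabs_def1; lra).
  unfold e in *; lra.
Qed.

Lemma scal_bound c X eps : 0 < eps -> 0 <= X -> X < eps / (Rabs c + 1) -> Rabs c * X < eps.
Proof.
  intros He HX HXe. assert (0 <= Rabs c) by apply Rabs_pos.
  assert (X * (Rabs c + 1) < eps).
  { apply (Rmult_lt_compat_r (Rabs c + 1)) in HXe; [|lra]. unfold Rdiv in HXe.
    rewrite Rmult_assoc, Rinv_l in HXe; lra. }
  nra.
Qed.

Lemma RInt_scalR (f : R -> R) a b c : ex_RInt f a b -> RInt (fun t => c * f t) a b = c * RInt f a b.
Proof. intros H. exact (RInt_scal f a b c H). Qed.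

Lemma ex_RInt_scalR (f : R -> R) a b c : ex_RInt f a b -> ex_RInt (fun t => c * f t) a b.
Proof. intros H. exact (ex_RInt_scal f a b c H). Qed.

Lemma impR_scal c (f : R -> R) l : imp_int_R f l -> imp_int_R (fun t => c * f t) (c * l).
Proof.
  intros H. pose proof (impR_elim _ _ H) as HE. destruct H as [Hi _]. split.
  - intros a b. destruct (Hi a b) as [pr]. constructor. apply ex_RInt_Reals_0.
    apply ex_RInt_scalR. apply ex_RInt_Reals_1; exact pr.
  - intros eps Heps. destruct (HE (eps / (Rabs c + 1))) as [M HM].
    { apply Rdiv_lt_0_compat; auto. pose proof (Rabs_pos c); lra. }
    exists M. intros a b pr Ha Hb. rewrite RI_eq.
    destruct (Hi a b) as [pr0].
    rewrite RInt_scalR by (apply ex_RInt_Reals_1; exact pr0).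
    replace (c * RInt f a b - c * l) with (c * (RInt f a b - l)) by ring.
    rewrite Rabs_mult. apply scal_bound; auto. apply Rabs_pos.
Qed.

Lemma impP_scal c (f : R -> R) l : imp_int_pos f l -> imp_int_pos (fun t => c * f t) (c * l).
Proof.
  intros H. pose proof (impP_elim _ _ H) as HE. destruct H as [Hi _]. split.
  - intros a b Ha Hab. destruct (Hi a b Ha Hab) as [pr]. constructor. apply ex_RInt_Reals_0.
    apply ex_RInt_scalR. apply ex_RInt_Reals_1; exact pr.
  - intros eps Heps. destruct (HE (eps / (Rabs c + 1))) as [d [Hd [M HM]]].
    { apply Rdiv_lt_0_compat; auto. pose proof (Rabs_pos c); lra. }
    exists d; split; auto. exists (Rmax M d). intros a b pr Ha Had Hb.
    assert (M <= b) by (eapply Rle_trans; [apply Rmax_l|eauto]).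
    assert (d <= b) by (eapply Rle_trans; [apply Rmax_r|eauto]).
    rewrite RI_eq.
    destruct (Hi a b Ha ltac:(lra)) as [pr0].
    rewrite RInt_scalR by (apply ex_RInt_Reals_1; exact pr0).
    replace (c * RInt f a b - c * l) with (c * (RInt f a b - l)) by ring.
    rewrite Rabs_mult. apply scal_bound; auto. apply Rabs_pos. apply HM; auto; lra.
Qed.

Lemma mono_sup (u : R -> R) B : (forall x y, 1 <= x -> x <= y -> u x <= u y) ->
  (forall x, 1 <= x -> u x <= B) ->
  exists S, (forall x, 1 <= x -> u x <= S) /\ (forall eps, 0 < eps -> exists x, 1 <= x /\ S - eps < u x).
Proof.
  intros Hm Hb.
  set (E := fun y => exists x, 1 <= x /\ y = u x).
  assert (HB : bound E) by (exists B; intros y [x [Hx ->]]; auto).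
  assert (HE : exists y, E y) by (exists (u 1); exists 1; split; [lra|auto]).
  destruct (completeness E HB HE) as [S [Hup Hlub]].
  exists S. split.
  - intros x Hx. apply Hup. exists x; auto.
  - intros eps Heps. apply NNPP; intro Hn.
    assert (S <= S - eps).
    { apply Hlub. intros y [x [Hx ->]]. apply Rnot_lt_le. intro Hlt. apply Hn. exists x; split; auto. }
    lra.
Qed.

Lemma RInt_mono_dom (f : R -> R) a b a' b' : (forall x, a' <= x <= b' -> continuous f x) ->
  (forall x, a' <= x <= b' -> 0 <= f x) -> a' <= a -> a <= b -> b <= b' ->
  RInt f a b <= RInt f a' b'.
Proof.
  intros Hc Hp H1 H2 H3.
  assert (Hex : forall c d, a' <= c -> c <= d -> d <= b' -> ex_RInt f c d).
  { intros c d ? ? ?. apply exRI. intros z Hz.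
    rewrite Rmin_left in Hz by lra; rewrite Rmax_right in Hz by lra. apply Hc; lra. }
  rewrite <- (RInt_Chasles f a' a b') by (apply Hex; lra).
  rewrite <- (RInt_Chasles f a b b') by (apply Hex; lra).
  assert (0 <= RInt f a' a) by (apply RInt_ge_0; [lra|apply Hex; lra| intros; apply Hp; lra]).
  assert (0 <= RInt f b b') by (apply RInt_ge_0; [lra|apply Hex; lra| intros; apply Hp; lra]).
  change (RInt f a b <= RInt f a' a + (RInt f a b + RInt f b b')). lra.
Qed.

Lemma impR_exists (f : R -> R) B : (forall x, continuous f x) -> (forall x, 0 <= f x) ->
  (forall a b, a <= b -> RInt f a b <= B) ->
  exists l, imp_int_R f l /\ (forall x, 1 <= x -> RInt f (-x) x <= l).
Proof.
  intros Hc Hp HB.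
  destruct (mono_sup (fun x => RInt f (-x) x) B) as [S [HS1 HS2]].
  - intros x y Hx Hy. apply RInt_mono_dom; auto; lra.
  - intros x Hx. apply HB; lra.
  - exists S. split; auto.
    apply impR_intro; auto. intros eps Heps. destruct (HS2 eps Heps) as [x0 [Hx0 Hlt]].
    exists x0. intros a b Ha Hb.
    assert (RInt f (-x0) x0 <= RInt f a b) by (apply RInt_mono_dom; auto; lra).
    set (X := Rmax (-a) b).
    assert (-a <= X) by apply Rmax_l. assert (b <= X) by apply Rmax_r.
    assert (RInt f a b <= RInt f (-X) X) by (apply RInt_mono_dom; auto; lra).
    assert (RInt f (-X) X <= S) by (apply HS1; lra).
    apply Rabs_def1; lra.
Qed.

Lemma impP_exists (f : R -> R) B : (forall x, 0 < x -> continuous f x) -> (forall x, 0 < x -> 0 <= f x) ->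
  (forall a b, 0 < a -> a <= b -> RInt f a b <= B) ->
  exists l, imp_int_pos f l /\ (forall a b, 0 < a -> a <= b -> RInt f a b <= l).
Proof.
  intros Hc Hp HB.
  assert (Hinv : forall x, 1 <= x -> 0 < / x /\ / x <= 1).
  { intros x Hx. split. apply Rinv_0_lt_compat; lra.
    rewrite <- Rinv_1. apply Rinv_le_contravar; lra. }
  destruct (mono_sup (fun x => RInt f (/x) x) B) as [S [HS1 HS2]].
  - intros x y Hx Hy. destruct (Hinv x Hx). destruct (Hinv y ltac:(lra)).
    assert (/ y <= / x) by (apply Rinv_le_contravar; lra).
    apply RInt_mono_dom; try lra; intros; [apply Hc|apply Hp]; lra.
  - intros x Hx. destruct (Hinv x Hx). apply HB; lra.
  - assert (Hup : forall a b, 0 < a -> a <= b -> RInt f a b <= S).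
    { intros a b Ha Hab.
      set (X := Rmax (Rmax (/a) b) 1).
      assert (/a <= X) by (unfold X; eapply Rle_trans; [apply Rmax_l|apply Rmax_l]).
      assert (b <= X) by (unfold X; eapply Rle_trans; [apply Rmax_r|apply Rmax_l]).
      assert (1 <= X) by (unfold X; apply Rmax_r).
      assert (/ X <= a).
      { rewrite <- (Rinv_inv a). apply Rinv_le_contravar; auto. apply Rinv_0_lt_compat; lra. }
      destruct (Hinv X ltac:(lra)).
      eapply Rle_trans; [|apply (HS1 X); lra].
      apply RInt_mono_dom; try lra; intros; [apply Hc|apply Hp]; lra. }
    exists S. split; auto.
    apply impP_intro; auto. intros eps Heps. destruct (HS2 eps Heps) as [x0 [Hx0 Hlt]].
    destruct (Hinv x0 Hx0).
    exists (/ x0). split; auto. exists x0. intros a b Ha Had Hb.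
    assert (RInt f (/x0) x0 <= RInt f a b).
    { apply RInt_mono_dom; try lra; intros; [apply Hc|apply Hp]; lra. }
    assert (RInt f a b <= S) by (apply Hup; lra).
    apply Rabs_def1; lra.
Qed.

Lemma cdr (f : R -> R) x : ex_derive f x -> continuous f x.
Proof. intros H. exact (ex_derive_continuous (K := R_AbsRing) (V := R_NormedModule) f x H). Qed.

Definition gau t := exp (- (t * t)).

Lemma gau_cont x : continuous gau x.
Proof. apply cdr. unfold gau. auto_derive. auto. Qed.

Lemma gau_pos t : 0 <= gau t.
Proof. unfold gau. left; apply exp_pos. Qed.

Lemma gau_le t : gau t <= / (1 + t^2).
Proof.
  unfold gau. rewrite exp_Ropp. apply Rinv_le_contravar.
  nra. pose proof (exp_ineq1_le (t*t)). simpl; lra.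
Qed.

Lemma atan_RInt a b : RInt (fun t => / (1 + t^2)) a b = atan b - atan a.
Proof.
  apply is_RInt_unique.
  apply (is_RInt_derive (V := R_CompleteNormedModule) atan (fun t => / (1 + t^2))).
  - intros x _. apply is_derive_Reals. apply derivable_pt_lim_atan.
  - intros x _. apply cdr. auto_derive. nra.
Qed.

Lemma gau_int : exists G, 0 < G /\ imp_int_R gau G.
Proof.
  destruct (impR_exists gau PI) as [G [HG1 HG2]].
  - apply gau_cont.
  - apply gau_pos.
  - intros a b Hab.
    eapply Rle_trans.
    + apply (RInt_le gau (fun t => / (1 + t^2))); auto.
      * apply exRI; intros; apply gau_cont.
      * apply exRI; intros. apply cdr. auto_derive. nra.
      * intros; apply gau_le.
    + rewrite atan_RInt. pose proof (atan_bound a). pose proof (atan_bound b). lra.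
  - exists G; split; auto.
    assert (H := HG2 1 ltac:(lra)).
    assert (RInt (fun _ => exp (-1)) (-1) 1 <= RInt gau (-1) 1).
    { apply RInt_le; try lra.
      - apply exRI; intros. apply continuous_const.
      - apply exRI; intros; apply gau_cont.
      - intros x Hx. unfold gau. apply expLe. assert ((1-x)*(1+x) > 0) by (apply Rmult_lt_0_compat; lra). nra. }
    replace (- (1)) with (-1) in H by ring.
    rewrite RInt_const in H0. change (scal (1 - -1) (exp (-1))) with ((1 - -1) * (exp (-1))) in H0.
    pose proof (exp_pos (-1)). lra.
Qed.

Lemma gau_scaled G al be : 0 < al -> imp_int_R gau G ->
  imp_int_R (fun t => exp (- (al * (t - be)^2))) (G / sqrt al).
Proof.
  intros Hal HG.
  set (u := sqrt al). assert (Hu : 0 < u) by (apply sqrt_lt_R0; auto).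
  assert (Huu : u * u = al) by (apply sqrt_sqrt; lra).
  assert (Hf : (fun t => exp (- (al * (t - be)^2))) = (fun t => gau (u * t + - (u * be)))).
  { apply functional_extensionality; intro t. unfold gau. f_equal. rewrite <- Huu. ring. }
  rewrite Hf. fold u.
  assert (Hc : forall t, continuous (fun t => gau (u * t + - (u * be))) t).
  { intros t. apply cdr. unfold gau. auto_derive. auto. }
  apply impR_intro; auto.
  intros eps Heps.
  destruct (impR_elim _ _ HG (eps * u)) as [M0 HM0]. { nra. }
  exists (M0 / u + Rabs be). intros a b Ha Hb.
  assert (Heq : RInt (fun t => gau (u * t + - (u * be))) a b
           = / u * RInt gau (u * a + - (u * be)) (u * b + - (u * be))).
  { assert (H3 : RInt (fun y => u * gau (u * y + - (u * be))) a b
                 = RInt gau (u * a + - (u * be)) (u * b + - (u * be))).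
    { exact (RInt_comp_lin (V := R_CompleteNormedModule) gau u (- (u*be)) a b
              ltac:(apply exRI; intros; apply gau_cont)). }
    rewrite RInt_scalR in H3.
    2:{ apply exRI; intros; apply Hc. }
    rewrite <- H3. rewrite <- Rmult_assoc, Rinv_l by lra. rewrite Rmult_1_l. reflexivity. }
  rewrite Heq.
  assert (HMu : u * (M0 / u) = M0) by (field; lra).
  pose proof (Rle_abs be). pose proof (Rle_abs (- be)). rewrite Rabs_Ropp in H0.
  assert (H1 : u * a + - (u * be) <= - M0) by nra.
  assert (H2 : M0 <= u * b + - (u * be)) by nra.
  specialize (HM0 _ _ H1 H2).
  replace (/ u * RInt gau (u * a + - (u * be)) (u * b + - (u * be)) - G / u)
    with (/ u * (RInt gau (u * a + - (u * be)) (u * b + - (u * be)) - G)) by (field; lra).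
  rewrite Rabs_mult, Rabs_right by (left; apply Rinv_0_lt_compat; auto).
  apply (Rmult_lt_reg_l u); auto. rewrite <- Rmult_assoc, Rinv_r by lra. lra.
Qed.

Lemma prodR_ext : forall k (f g : nat -> R), (forall i, (i < k)%nat -> f i = g i) -> prodR k f = prodR k g.
Proof.
  induction k; intros f g H; simpl; auto.
  rewrite (IHk f g) by (intros; apply H; lia). rewrite H by lia. auto.
Qed.

Lemma iter_int_prod (f : nat -> R -> R) (v : nat -> R) : forall k,
  (forall i, (i < k)%nat -> imp_int_R (f i) (v i)) ->
  forall c F, (forall th, F th = c * prodR k (fun i => f i (th i))) -> iter_int k F (c * prodR k v).
Proof.
  induction k as [|k IH]; intros Hf c F HF.
  - simpl. rewrite HF. simpl. reflexivity.
  - simpl. exists (fun t => (c * prodR k v) * f k t). split.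
    + intros t. replace (c * prodR k v * f k t) with ((c * f k t) * prodR k v) by ring.
      apply IH. intros; apply Hf; lia.
      intros th. rewrite HF. simpl.
      unfold upd at 2. rewrite Nat.eqb_refl.
      rewrite (prodR_ext k (fun i => f i (upd th k t i)) (fun i => f i (th i))). ring.
      intros i Hi. unfold upd. replace (Nat.eqb i k) with false; auto.
      symmetry; apply Nat.eqb_neq; lia.
    + replace (c * (prodR k v * v k)) with (c * prodR k v * v k) by ring.
      apply impR_scal. apply Hf; lia.
Qed.

Lemma iter_int_unique : forall k F l1 l2, iter_int k F l1 -> iter_int k F l2 -> l1 = l2.
Proof.
  induction k; simpl; intros F l1 l2 H1 H2.
  - congruence.
  - destruct H1 as [g1 [H1 I1]]. destruct H2 as [g2 [H2 I2]].
    assert (g1 = g2). { apply functional_extensionality. intros t. eapply IHk; eauto. }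
    subst. eapply impR_unique; eauto.
Qed.

Definition Kc G V := G * exp (/2 * ln (2 * V)).
Definition rr V b0 m s p A := Rpower A (-p) * exp (-b0/A) * exp (-(m/2) * (ln (A+V) + s/(A+V))).
Definition CstK G V n := Kc G V ^ n * G * exp (- /2 * (ln (INR n) - ln 2)).

Lemma sqrt_exp x : 0 < x -> sqrt x = exp (/2 * ln x).
Proof. intros H. rewrite <- Rpower_sqrt by auto. unfold Rpower. reflexivity. Qed.

Lemma theta_factor G V A mu y : 0 < V -> 0 < A -> imp_int_R gau G ->
  imp_int_R (fun t => Rpower A (- / 2) * exp (- (t - mu) ^ 2 / (2 * A)) * exp (- (y - t) ^ 2 / (2 * V)))
            (Kc G V * exp (- / 2 * ln (A + V) + - / (2 * (A + V)) * (y - mu) ^ 2)).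
Proof.
  intros HV HA HG.
  set (al := (A + V) / (2 * V * A)).
  set (m := (V * mu + A * y) / (A + V)).
  assert (Hal : 0 < al) by (unfold al; apply Rdiv_lt_0_compat; nra).
  assert (Hf : (fun t => Rpower A (- / 2) * exp (- (t - mu) ^ 2 / (2 * A)) * exp (- (y - t) ^ 2 / (2 * V)))
             = (fun t => (Rpower A (- / 2) * exp (- (y - mu) ^ 2 / (2 * (A + V)))) * exp (- (al * (t - m) ^ 2)))).
  { apply functional_extensionality; intro t.
    rewrite !Rmult_assoc, <- !exp_plus. f_equal. f_equal. unfold al, m. field. lra. }
  rewrite Hf.
  replace (Kc G V * exp (- / 2 * ln (A + V) + - / (2 * (A + V)) * (y - mu) ^ 2))
    with ((Rpower A (- / 2) * exp (- (y - mu) ^ 2 / (2 * (A + V)))) * (G / sqrt al)).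
  { apply impR_scal. apply gau_scaled; auto. }
  rewrite sqrt_exp by auto. unfold Rpower, Kc, Rdiv. rewrite <- exp_Ropp.
  assert (Hln : ln al = ln (A + V) - (ln (2 * V) + ln A)).
  { unfold al. rewrite ln_div by nra. rewrite ln_mult by nra. reflexivity. }
  transitivity (G * (exp (- / 2 * ln A) * exp (- (y - mu) ^ 2 * / (2 * (A + V))) * exp (- (/ 2 * ln al)))).
  { ring. }
  rewrite <- !exp_plus. rewrite Rmult_assoc, <- exp_plus. f_equal. f_equal. rewrite Hln. field. lra.
Qed.

Lemma prodR_exp : forall k K (x : nat -> R), prodR k (fun i => K * exp (x i)) = K ^ k * exp (sumR k x).
Proof.
  induction k; intros K x; simpl.
  - rewrite exp_0. ring.
  - rewrite IHk, exp_plus. ring.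
Qed.

Lemma sumR_sq : forall k (y : nat -> R) p r c,
  sumR k (fun i => p + r * (y i - c) ^ 2)
  = INR k * p + r * (sumR k (fun i => y i ^ 2) - 2 * c * sumR k y + INR k * c ^ 2).
Proof.
  induction k; intros; cbn [sumR].
  - simpl. ring.
  - rewrite IHk, S_INR. ring.
Qed.

Lemma sumR_sq0 : forall k (y : nat -> R) c,
  sumR k (fun i => (y i - c) ^ 2)
  = sumR k (fun i => y i ^ 2) - 2 * c * sumR k y + INR k * c ^ 2.
Proof.
  induction k; intros; cbn [sumR].
  - simpl. ring.
  - rewrite IHk, S_INR. ring.
Qed.

Definition xsum V Y n A mu :=
  sumR n (fun i => - / 2 * ln (A + V) + - / (2 * (A + V)) * (Y n i - mu) ^ 2).

Lemma mu_iter G V a b0 Y n A mu k (F : (nat -> R) -> R) : 0 < V -> 0 < A -> imp_int_R gau G ->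
  (forall th, F th = k * post_dens V a b0 Y n A mu th) ->
  iter_int n F (k * (Rpower A (-a-1) * exp (-b0/A)) * (Kc G V ^ n * exp (xsum V Y n A mu))).
Proof.
  intros HV HA HG HF. unfold xsum.
  rewrite <- (prodR_exp n (Kc G V) (fun i => - / 2 * ln (A + V) + - / (2 * (A + V)) * (Y n i - mu) ^ 2)).
  apply (iter_int_prod (fun i t => Rpower A (- / 2) * exp (- (t - mu) ^ 2 / (2 * A)) * exp (- (Y n i - t) ^ 2 / (2 * V)))).
  - intros i Hi. apply theta_factor; auto.
  - intros th. rewrite HF. unfold post_dens. symmetry; apply Rmult_assoc.
Qed.

Lemma mu_int G V a b0 Y n A k : 0 < V -> 0 < A -> (2 <= n)%nat -> 0 < G -> imp_int_R gau G ->
  imp_int_R (fun mu => k * (Rpower A (-a-1) * exp (-b0/A)) * (Kc G V ^ n * exp (xsum V Y n A mu)))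
    (k * (CstK G V n * rr V b0 (INR n - 1) (DeltaY Y n / (INR n - 1)) (a + 1) A)).
Proof.
  intros HV HA Hn HG0 HG.
  assert (Hnn : 2 <= INR n) by (replace 2 with (INR 2) by (simpl; ring); apply le_INR; auto).
  set (nn := INR n) in *.
  set (S := sumR n (Y n)). set (S2 := sumR n (fun i => Y n i ^ 2)).
  set (u := A + V). assert (Hu : 0 < u) by (unfold u; lra).
  set (L := ln u).
  set (D := DeltaY Y n).
  assert (Hyb : Ybar Y n = S / nn) by reflexivity.
  assert (HD : D = S2 - 2 * Ybar Y n * S + nn * Ybar Y n ^ 2).
  { unfold D, DeltaY. rewrite sumR_sq0. reflexivity. }
  set (be := nn / (2 * u)). assert (Hbe : 0 < be) by (unfold be; apply Rdiv_lt_0_compat; lra).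
  set (E0 := - (nn / 2) * L - D / (2 * u)).
  set (C0 := Rpower A (-a-1) * exp (-b0/A)).
  assert (Hf : (fun mu => k * C0 * (Kc G V ^ n * exp (xsum V Y n A mu)))
             = (fun mu => (k * C0 * Kc G V ^ n * exp E0) * exp (- (be * (mu - Ybar Y n) ^ 2)))).
  { apply functional_extensionality; intro mu. unfold xsum. rewrite sumR_sq. fold S S2 u nn.
    rewrite !Rmult_assoc. f_equal. f_equal. f_equal. rewrite <- exp_plus. f_equal.
    unfold E0, be, L. rewrite HD, Hyb. field. lra. }
  fold C0. rewrite Hf.
  replace (k * (CstK G V n * rr V b0 (nn - 1) (D / (nn - 1)) (a + 1) A))
    with (k * C0 * Kc G V ^ n * exp E0 * (G / sqrt be)).
  { apply impR_scal. apply gau_scaled; auto. }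
  rewrite sqrt_exp by auto.
  assert (Hlnb : ln be = ln nn - (ln 2 + L)).
  { unfold be, L. rewrite ln_div by lra. rewrite ln_mult by lra. reflexivity. }
  unfold C0, CstK, rr, Rdiv. rewrite <- exp_Ropp. fold u L.
  replace (-a-1) with (-(a+1)) by ring.
  assert (Hexp : exp E0 * exp (- (/ 2 * ln be))
                 = exp (- / 2 * (ln nn - ln 2)) * exp (- ((nn - 1) * / 2) * (L + D * / (nn - 1) * / u))).
  { rewrite <- !exp_plus. f_equal. rewrite Hlnb. unfold E0. field. lra. }
  transitivity (k * Rpower A (- (a + 1)) * exp (- b0 * / A) * Kc G V ^ n * G * (exp E0 * exp (- (/ 2 * ln be)))).
  { ring. }
  rewrite Hexp. change (INR n) with nn. unfold nn, u, L, D. ring.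
Qed.

Lemma post_int_k G V a b0 Y n (kf : R -> R) (F : R -> R -> (nat -> R) -> R) Q :
  0 < V -> (2 <= n)%nat -> 0 < G -> imp_int_R gau G ->
  (forall A mu th, 0 < A -> F A mu th = kf A * post_dens V a b0 Y n A mu th) ->
  imp_int_pos (fun A => kf A * (CstK G V n * rr V b0 (INR n - 1) (DeltaY Y n / (INR n - 1)) (a + 1) A)) Q ->
  post_int n F Q.
Proof.
  intros HV Hn HG0 HG HF HQ.
  exists (fun A => kf A * (CstK G V n * rr V b0 (INR n - 1) (DeltaY Y n / (INR n - 1)) (a + 1) A)).
  split; auto. intros A HA.
  exists (fun mu => kf A * (Rpower A (-a-1) * exp (-b0/A)) * (Kc G V ^ n * exp (xsum V Y n A mu))).
  split.
  - intros mu. apply mu_iter; auto.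
  - apply mu_int; auto.
Qed.

Lemma post_int_val G V a b0 Y n (kf : R -> R) (F : R -> R -> (nat -> R) -> R) Q Z :
  0 < V -> (2 <= n)%nat -> 0 < G -> imp_int_R gau G ->
  (forall A mu th, 0 < A -> F A mu th = kf A * post_dens V a b0 Y n A mu th) ->
  imp_int_pos (fun A => kf A * (CstK G V n * rr V b0 (INR n - 1) (DeltaY Y n / (INR n - 1)) (a + 1) A)) Q ->
  post_int n F Z -> Z = Q.
Proof.
  intros HV Hn HG0 HG HF HQ [h [Hh Hpos]].
  apply (impP_unique h (fun A => kf A * (CstK G V n * rr V b0 (INR n - 1) (DeltaY Y n / (INR n - 1)) (a + 1) A)) Z Q); auto.
  intros A HA. destruct (Hh A HA) as [g [Hg Hi]].
  assert (g = fun mu => kf A * (Rpower A (-a-1) * exp (-b0/A)) * (Kc G V ^ n * exp (xsum V Y n A mu))).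
  { apply functional_extensionality; intro mu. eapply iter_int_unique; [apply Hg|].
    apply mu_iter; auto. }
  subst g. eapply impR_unique; [exact Hi|]. apply mu_int; auto.
Qed.

Definition phi s u := ln u + s / u.

Lemma rr_phi V b0 m s p A : rr V b0 m s p A = Rpower A (-p) * exp (-b0/A) * exp (-(m/2) * phi s (A+V)).
Proof. reflexivity. Qed.

Lemma rr_cont V b0 m s p A : 0 < V -> 0 < A -> continuous (rr V b0 m s p) A.
Proof.
  intros HV HA. apply cdr. unfold rr, Rpower. auto_derive. repeat split; lra.
Qed.

Lemma Rpower_pos' A p : 0 < Rpower A p.
Proof. unfold Rpower. apply exp_pos. Qed.

Lemma rr_pos V b0 m s p A : 0 < rr V b0 m s p A.
Proof.
  unfold rr. pose proof (Rpower_pos' A (-p)). pose proof (exp_pos (-b0/A)).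
  pose proof (exp_pos (-(m/2) * (ln (A+V) + s/(A+V)))).
  apply Rmult_lt_0_compat; [apply Rmult_lt_0_compat|]; auto.
Qed.

Lemma rr_succ V b0 m s p A : 0 < A -> rr V b0 m s (p + 1) A = / A * rr V b0 m s p A.
Proof.
  intros HA. unfold rr, Rpower.
  replace (- (p + 1) * ln A) with (- p * ln A + - ln A) by ring.
  rewrite exp_plus, exp_Ropp, exp_ln by auto. ring.
Qed.

Lemma ln_le_xm1 x : 0 < x -> ln x <= x - 1.
Proof.
  intros Hx. pose proof (exp_ineq1_le (x-1)). rewrite <- (ln_exp (x-1)).
  apply ln_le; auto; lra.
Qed.

Lemma pow_bound b0 p : 0 < p -> 0 < b0 ->
  exists B, 0 < B /\ forall A, 0 < A -> Rpower A (-p) * exp (-b0/A) <= B.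
Proof.
  intros Hp Hb. exists (exp (p * ln p - p * ln b0 - p)). split; [apply exp_pos|].
  intros A HA. unfold Rpower. rewrite <- exp_plus. apply expLe.
  set (x := b0 / (p * A)).
  assert (Hx : 0 < x) by (unfold x; apply Rdiv_lt_0_compat; nra).
  assert (H1 := ln_le_xm1 x Hx).
  assert (Hl : ln x = ln b0 - (ln p + ln A)).
  { unfold x. rewrite ln_div by nra. rewrite ln_mult by nra. reflexivity. }
  assert (Hpx : p * x = b0 / A) by (unfold x; field; lra).
  assert (H2 : p * ln x <= p * (x - 1)) by (apply Rmult_le_compat_l; lra).
  rewrite Hl in H2.
  assert (H3 : p * (x - 1) = b0 / A - p) by (rewrite <- Hpx; ring).
  rewrite H3 in H2.
  unfold Rdiv in *. lra.
Qed.

Lemma phi_mono s u u' : 0 < u -> u <= u' -> u' <= s ->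
  phi s u - phi s u' >= (u'/u - 1) - ln (u'/u) /\ (u'/u - 1) - ln (u'/u) >= 0.
Proof.
  intros Hu Huu Hs. split.
  - unfold phi. rewrite ln_div by lra.
    assert (E : s / u - s / u' - (u' / u - 1) = (s - u') * (u' - u) / (u * u')) by (field; lra).
    assert (0 <= (s - u') * (u' - u) / (u * u')).
    { apply Rmult_le_pos. apply Rmult_le_pos; lra. left; apply Rinv_0_lt_compat; nra. }
    lra.
  - pose proof (ln_le_xm1 (u'/u) ltac:(apply Rdiv_lt_0_compat; lra)). lra.
Qed.

Lemma c0pos r : 1 < r -> 0 < (r - 1) - ln r.
Proof.
  intros Hr. set (t := (1 + r) / 2).
  assert (Ht : 0 < t) by (unfold t; lra).
  assert (Hl : ln r = ln (r / t) + ln t).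
  { rewrite <- ln_mult by (try apply Rdiv_lt_0_compat; lra). f_equal. field. lra. }
  pose proof (ln_le_xm1 (r/t) ltac:(apply Rdiv_lt_0_compat; lra)).
  pose proof (ln_le_xm1 t Ht).
  assert (E : (r - 1) - ((r / t - 1) + (t - 1)) = (r - 1) ^ 2 / (2 * (1 + r))) by (unfold t; field; lra).
  assert (0 < (r - 1) ^ 2 / (2 * (1 + r))).
  { apply Rdiv_lt_0_compat. apply pow_lt; lra. lra. }
  lra.
Qed.

Lemma tail_bound V b0 m s p : 0 < V -> 0 < b0 -> 4 <= m -> 0 <= s -> 0 < p ->
  exists Bt, forall x y, 0 < x -> x <= y -> RInt (rr V b0 m s p) x y <= Bt.
Proof.
  intros HV Hb Hm Hs Hp.
  destruct (pow_bound b0 p Hp Hb) as [B [HB0 HB]].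
  set (Cc := B * exp (- ((m - 4) / 2) * ln V)).
  assert (HCc : 0 < Cc) by (unfold Cc; apply Rmult_lt_0_compat; auto; apply exp_pos).
  exists (Cc / V). intros x y Hx Hxy.
  assert (Hpt : forall A, 0 < A -> rr V b0 m s p A <= Cc * / ((A + V) * (A + V))).
  { intros A HA. unfold rr. set (u := A + V). assert (Hu : V < u) by (unfold u; lra).
    assert (HL : ln V <= ln u) by (apply ln_le; lra).
    assert (Hsu : 0 <= s / u) by (apply Rdiv_le_0_compat; lra).
    assert (E1 : exp (- (m / 2) * (ln u + s / u)) <= exp (- ((m - 4) / 2) * ln V) * / (u * u)).
    { assert (Hinv : / (u * u) = exp (- (2 * ln u))).
      { rewrite exp_Ropp. f_equal. replace (2 * ln u) with (ln u + ln u) by ring.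
        rewrite exp_plus, exp_ln by lra. reflexivity. }
      rewrite Hinv, <- exp_plus. apply expLe.
      assert (0 <= ((m - 4) / 2) * (ln u - ln V)) by (apply Rmult_le_pos; lra).
      assert (0 <= (m / 2) * (s / u)) by (apply Rmult_le_pos; lra).
      nra. }
    unfold Cc. rewrite (Rmult_assoc B).
    apply Rmult_le_compat; auto.
    - left; apply Rmult_lt_0_compat; [apply Rpower_pos'|apply exp_pos].
    - left; apply exp_pos. }
  assert (Hint : RInt (fun A => Cc * / ((A + V) * (A + V))) x y = Cc * / (x + V) - Cc * / (y + V)).
  { apply is_RInt_unique.
    replace (Cc * / (x + V) - Cc * / (y + V)) with (minus (- (Cc * / (y + V))) (- (Cc * / (x + V))))
      by (unfold minus, plus, opp; simpl; ring).
    apply (is_RInt_derive (V := R_CompleteNormedModule) (fun A => - (Cc * / (A + V)))).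
    - intros z Hz. rewrite Rmin_left in Hz by lra. rewrite Rmax_right in Hz by lra.
      auto_derive. lra. field. lra.
    - intros z Hz. rewrite Rmin_left in Hz by lra. rewrite Rmax_right in Hz by lra.
      apply cdr. auto_derive. nra. }
  eapply Rle_trans.
  - apply (RInt_le _ (fun A => Cc * / ((A + V) * (A + V)))); auto.
    + apply exRI. intros z Hz. rewrite Rmin_left in Hz by lra. apply rr_cont; lra.
    + apply exRI. intros z Hz. rewrite Rmin_left in Hz by lra. apply cdr. auto_derive. nra.
    + intros z Hz. apply Hpt. lra.
  - rewrite Hint.
    assert (Cc * / (x + V) <= Cc * / V).
    { apply Rmult_le_compat_l; [lra|]. apply Rinv_le_contravar; lra. }
    assert (0 <= Cc * / (y + V)) by (apply Rmult_le_pos; [lra|left; apply Rinv_0_lt_compat; lra]).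
    unfold Rdiv. lra.
Qed.

Lemma rr_int V b0 m s p : 0 < V -> 0 < b0 -> 4 <= m -> 0 <= s -> 0 < p ->
  exists Q, imp_int_pos (rr V b0 m s p) Q /\ forall x y, 0 < x -> x <= y -> RInt (rr V b0 m s p) x y <= Q.
Proof.
  intros HV Hb Hm Hs Hp.
  destruct (tail_bound V b0 m s p) as [Bt HBt]; auto.
  apply (impP_exists _ Bt); auto.
  - intros; apply rr_cont; auto.
  - intros; left; apply rr_pos.
Qed.

Ltac rring := match goal with |- ?x = ?y => change (@eq R x y) end; ring.

Definition Lc a b0 delta := Rpower delta (-(a+1)) * exp (-b0/(3*delta/4)).

Lemma Lc_pos a b0 delta : 0 < Lc a b0 delta.
Proof. unfold Lc. apply Rmult_lt_0_compat; [apply Rpower_pos'|apply exp_pos]. Qed.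

Lemma lowb V a b0 delta m s A : 0 < V -> 0 < a -> 0 < b0 -> 0 < delta -> 0 <= m -> V + delta <= s ->
  3 * delta / 4 <= A <= delta ->
  Lc a b0 delta * exp (-(m/2) * phi s (V + 3 * delta / 4)) <= rr V b0 (m) s (a+1) A.
Proof.
  intros HV Ha Hb Hd Hm Hs HA. rewrite rr_phi. unfold Lc.
  apply Rmult_le_compat.
  - left; apply Lc_pos.
  - left; apply exp_pos.
  - apply Rmult_le_compat.
    + left; apply Rpower_pos'.
    + left; apply exp_pos.
    + unfold Rpower. apply expLe.
      assert (ln A <= ln delta) by (apply ln_le; lra). nra.
    + apply expLe. unfold Rdiv.
      assert (/ A <= / (3 * delta * / 4)) by (apply Rinv_le_contravar; lra).
      assert (b0 * / A <= b0 * / (3 * delta * / 4)) by (apply Rmult_le_compat_l; lra).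
      lra.
  - apply expLe.
    destruct (phi_mono s (V + 3 * delta / 4) (A + V)) as [H1 H2]; try lra.
    nra.
Qed.

Lemma upb V a b0 delta m s A B2 : 0 < V -> 0 < delta -> 0 <= m -> V + delta <= s ->
  (forall A, 0 < A -> Rpower A (-(a+2)) * exp (-b0/A) <= B2) ->
  0 < A -> A <= delta / 2 ->
  rr V b0 m s (a+2) A <= B2 * exp (-(m/2) * phi s (V + delta / 2)).
Proof.
  intros HV Hd Hm Hs HB HA HAd. rewrite rr_phi.
  apply Rmult_le_compat.
  - left; apply Rmult_lt_0_compat; [apply Rpower_pos'|apply exp_pos].
  - left; apply exp_pos.
  - apply HB; auto.
  - apply expLe.
    destruct (phi_mono s (A + V) (V + delta / 2)) as [H1 H2]; try lra.
    nra.
Qed.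

Lemma RInt_const0 (a b c : R) : RInt (fun _ => c) a b = (b - a) * c.
Proof. rewrite RInt_const. reflexivity. Qed.

Lemma key V a b0 delta : 0 < V -> 0 < a -> 0 < b0 -> 0 < delta ->
  exists Mr, forall m s, Mr <= m -> 0 <= m -> V + delta <= s ->
    forall x y, 0 < x -> x <= delta / 2 -> delta <= y ->
      RInt (rr V b0 m s (a+2)) x y - 2 / delta * RInt (rr V b0 m s (a+1)) x y <= 0.
Proof.
  intros HV Ha Hb Hd.
  destruct (pow_bound b0 (a+2) ltac:(lra) Hb) as [B2 [HB20 HB2]].
  set (u1 := V + delta / 2). set (u2 := V + 3 * delta / 4).
  set (r0 := u2 / u1).
  assert (Hr0 : 1 < r0).
  { unfold r0. apply (Rmult_lt_reg_r u1). unfold u1; lra. unfold Rdiv. rewrite Rmult_assoc, Rinv_l by (unfold u1; lra).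
    unfold u1, u2; lra. }
  set (c0 := (r0 - 1) - ln r0). assert (Hc0 : 0 < c0) by (apply c0pos; auto).
  set (L := Lc a b0 delta). assert (HL : 0 < L) by apply Lc_pos.
  set (K := 3 * delta * B2 / L). assert (HK : 0 < K) by (unfold K; apply Rdiv_lt_0_compat; nra).
  exists (2 * K / c0). intros m s Hm Hm0 Hs x y Hx Hxd Hy.
  assert (HmK : K <= (m / 2) * c0).
  { apply (Rmult_le_compat_r c0) in Hm; [|lra]. unfold Rdiv in *.
    replace (2 * K * / c0 * c0) with (2 * K) in Hm by (field; lra). lra. }
  set (e1 := exp (-(m/2) * phi s u1)). set (e2 := exp (-(m/2) * phi s u2)).
  assert (He1 : 0 < e1) by apply exp_pos. assert (He2 : 0 < e2) by apply exp_pos.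
  assert (Hgap : e1 <= e2 * exp (- ((m/2) * c0))).
  { unfold e1, e2. rewrite <- exp_plus. apply expLe.
    destruct (phi_mono s u1 u2) as [H1 H2]; try (unfold u1, u2; lra).
    fold r0 c0 in H1. nra. }
  assert (Hfin : 3 * delta * B2 * e1 <= L * e2).
  { assert (Hex : K <= exp ((m/2) * c0)) by (pose proof (exp_ineq1_le ((m/2) * c0)); lra).
    assert (3 * delta * B2 * exp (- ((m/2) * c0)) <= L).
    { rewrite exp_Ropp. unfold K in Hex.
      assert (3 * delta * B2 <= L * exp (m / 2 * c0)).
      { apply (Rmult_le_compat_l L) in Hex; [|lra]. unfold Rdiv in Hex.
        replace (L * (3 * delta * B2 * / L)) with (3 * delta * B2) in Hex by (field; lra). lra. }
      pose proof (exp_pos (m / 2 * c0)).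
      apply (Rmult_le_reg_r (exp (m / 2 * c0))); auto.
      rewrite Rmult_assoc, Rinv_l by lra. lra. }
    assert (3 * delta * B2 * e1 <= 3 * delta * B2 * (e2 * exp (- ((m/2) * c0)))).
    { apply Rmult_le_compat_l; nra. }
    nra. }
  set (w := fun A => (/ A - 2 / delta) * rr V b0 m s (a+1) A).
  assert (Hcw : forall A, 0 < A -> continuous w A).
  { intros A HA. apply (continuous_mult (U := R_UniformSpace) (K := R_AbsRing) (fun A => / A - 2 / delta) (rr V b0 m s (a+1))).
    - apply cdr. auto_derive. lra.
    - apply rr_cont; auto. }
  assert (HexR : forall p c d, 0 < c -> c <= d -> ex_RInt (rr V b0 m s p) c d).
  { intros p c d Hc Hcd. apply exRI. intros z Hz. rewrite Rmin_left in Hz by lra. apply rr_cont; lra. }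
  assert (Hexw : forall c d, 0 < c -> c <= d -> ex_RInt w c d).
  { intros c d Hc Hcd. apply exRI. intros z Hz. rewrite Rmin_left in Hz by lra. apply Hcw; lra. }
  assert (Hlin : RInt (rr V b0 m s (a+2)) x y - 2 / delta * RInt (rr V b0 m s (a+1)) x y = RInt w x y).
  { rewrite <- RInt_scalR by (apply HexR; lra).
    assert (Hm2 : RInt (fun t => rr V b0 m s (a+2) t - 2 / delta * rr V b0 m s (a+1) t) x y
                  = RInt (rr V b0 m s (a+2)) x y - RInt (fun t => 2 / delta * rr V b0 m s (a+1) t) x y).
    { exact (RInt_minus (V := R_CompleteNormedModule) _ _ x y (HexR _ x y Hx ltac:(lra))
              (ex_RInt_scalR _ _ _ _ (HexR _ x y Hx ltac:(lra)))). }
    rewrite <- Hm2. apply RInt_ext. intros z Hz. rewrite Rmin_left in Hz by lra.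
    unfold w. replace (a + 2) with ((a + 1) + 1) by ring. rewrite rr_succ by lra. match goal with |- ?x = ?y => change (@eq R x y) end. ring. }
  rewrite Hlin.
  assert (Hw0 : forall A, delta / 2 <= A -> w A <= 0).
  { intros A HA. unfold w.
    assert (/ A <= / (delta / 2)) by (apply Rinv_le_contravar; lra).
    assert (/ (delta / 2) = 2 / delta) by (field; lra).
    pose proof (rr_pos V b0 m s (a+1) A). nra. }
  assert (I1 : RInt w x (delta / 2) <= (delta / 2) * (B2 * e1)).
  { eapply Rle_trans.
    - apply (RInt_le w (fun _ => B2 * e1)); try lra.
      + apply Hexw; lra.
      + apply exRI; intros; apply continuous_const.
      + intros A HA. unfold w.
        pose proof (rr_pos V b0 m s (a+1) A).
        assert (Hr : rr V b0 m s (a+2) A = / A * rr V b0 m s (a+1) A).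
        { replace (a + 2) with ((a + 1) + 1) by ring. apply rr_succ; lra. }
        assert (rr V b0 m s (a+2) A <= B2 * e1) by (apply (upb V a b0 delta m s A B2); auto; lra).
        assert (0 < 2 / delta) by (apply Rdiv_lt_0_compat; lra).
        nra.
    - rewrite RInt_const0. apply Rmult_le_compat_r; [nra|lra]. }
  assert (I2 : RInt w (delta / 2) (3 * delta / 4) <= 0).
  { replace 0 with (RInt (fun _ => 0) (delta / 2) (3 * delta / 4)) by (rewrite RInt_const0; rring).
    apply (RInt_le w (fun _ => 0)); try lra.
    + apply Hexw; lra.
    + apply exRI; intros; apply continuous_const.
    + intros A HA. apply Hw0; lra. }
  assert (I4 : RInt w delta y <= 0).
  { replace 0 with (RInt (fun _ => 0) delta y) by (rewrite RInt_const0; rring).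
    apply (RInt_le w (fun _ => 0)); try lra.
    + apply Hexw; lra.
    + apply exRI; intros; apply continuous_const.
    + intros A HA. apply Hw0; lra. }
  assert (I3 : RInt w (3 * delta / 4) delta <= (delta / 4) * (- (2 / (3 * delta)) * (L * e2))).
  { eapply Rle_trans.
    - apply (RInt_le w (fun _ => - (2 / (3 * delta)) * (L * e2))); try lra.
      + apply Hexw; lra.
      + apply exRI; intros; apply continuous_const.
      + intros A HA. unfold w.
        assert (Hlow : L * e2 <= rr V b0 m s (a+1) A) by (apply lowb; auto; lra).
        assert (/ A <= / (3 * delta / 4)) by (apply Rinv_le_contravar; lra).
        assert (/ (3 * delta / 4) - 2 / delta = - (2 / (3 * delta))) by (field; lra).
        assert (0 < 2 / (3 * delta)) by (apply Rdiv_lt_0_compat; lra).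
        assert (0 < L * e2) by nra.
        nra.
    - rewrite RInt_const0. right. match goal with |- ?x = ?y => change (@eq R x y) end; field; lra. }
  rewrite <- (RInt_Chasles w x (delta / 2) y) by (apply Hexw; lra).
  rewrite <- (RInt_Chasles w (delta / 2) (3 * delta / 4) y) by (apply Hexw; lra).
  rewrite <- (RInt_Chasles w (3 * delta / 4) delta y) by (apply Hexw; lra).
  change (RInt w x (delta / 2) + (RInt w (delta / 2) (3 * delta / 4) + (RInt w (3 * delta / 4) delta + RInt w delta y)) <= 0).
  assert ((delta / 4) * (- (2 / (3 * delta)) * (L * e2)) = - (L * e2) / 6) by (field; lra).
  nra.
Qed.

Lemma rr_int_pos V a b0 delta m s : 0 < V -> 0 < a -> 0 < b0 -> 0 < delta -> 0 <= m -> V + delta <= s ->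
  0 < RInt (rr V b0 m s (a+1)) (3 * delta / 4) delta.
Proof.
  intros HV Ha Hb Hd Hm Hs.
  set (c := Lc a b0 delta * exp (-(m/2) * phi s (V + 3 * delta / 4))).
  assert (Hc : 0 < c) by (unfold c; apply Rmult_lt_0_compat; [apply Lc_pos|apply exp_pos]).
  apply Rlt_le_trans with (RInt (fun _ => c) (3 * delta / 4) delta).
  - rewrite RInt_const0. nra.
  - apply (RInt_le (fun _ => c)); try lra.
    + apply exRI; intros; apply continuous_const.
    + apply exRI. intros z Hz. rewrite Rmin_left in Hz by lra. apply rr_cont; lra.
    + intros A HA. apply lowb; auto; lra.
Qed.

Lemma impP_ext (f g : R -> R) l : (forall x, 0 < x -> f x = g x) -> imp_int_pos f l -> imp_int_pos g l.
Proof.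
  intros Hfg H. pose proof (impP_elim _ _ H) as HE. destruct H as [Hi _].
  assert (Hex : forall a b, 0 < a -> a <= b -> ex_RInt g a b /\ RInt g a b = RInt f a b).
  { intros a b Ha Hab. destruct (Hi a b Ha Hab) as [pr].
    assert (Hf : ex_RInt f a b) by (apply ex_RInt_Reals_1; exact pr).
    assert (He : forall x, Rmin a b < x < Rmax a b -> f x = g x).
    { intros x Hx. rewrite Rmin_left in Hx by lra. apply Hfg. lra. }
    split. exact (ex_RInt_ext f g a b He Hf).
    symmetry. apply RInt_ext. auto. }
  split.
  - intros a b Ha Hab. constructor. apply ex_RInt_Reals_0. apply Hex; auto.
  - intros eps Heps. destruct (HE eps Heps) as [d [Hd [M HM]]].
    exists d; split; auto. exists (Rmax M d). intros a b pr Ha Had Hb.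
    assert (M <= b) by (eapply Rle_trans; [apply Rmax_l|eauto]).
    assert (d <= b) by (eapply Rle_trans; [apply Rmax_r|eauto]).
    rewrite RI_eq. destruct (Hex a b Ha ltac:(lra)) as [_ ->]. apply HM; auto; lra.
Qed.

Theorem mainTheorem10 :
  forall (V a b0 : R) (Y : nat -> nat -> R) (delta M : R) (N0 : nat),
    0 < V -> 0 < a -> 0 < b0 ->
    (* Assumption (A) *)
    0 < delta ->
    (forall n : nat, (2 <= n)%nat -> DeltaY Y n / INR (n - 1) <= M) ->
    (forall n : nat, (2 <= n)%nat -> (N0 <= n)%nat ->
        V + delta <= DeltaY Y n / INR (n - 1)) ->
    exists N : nat, forall n : nat, (2 <= n)%nat -> (N <= n)%nat ->
      (* the posterior is proper and E_pi[1/A] is finite ... *)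
      (exists Z Z1 : R, 0 < Z /\
         post_int n (post_dens V a b0 Y n) Z /\
         post_int n (fun A mu th => / A * post_dens V a b0 Y n A mu th) Z1) /\
      (* ... and E_pi[1/A] = Z1 / Z <= 2 / delta *)
      (forall Z Z1 : R,
         post_int n (post_dens V a b0 Y n) Z ->
         post_int n (fun A mu th => / A * post_dens V a b0 Y n A mu th) Z1 ->
         Z1 <= (2 / delta) * Z).
Proof.
  intros V a b0 Y delta M N0 HV Ha Hb Hd _ HA.
  destruct gau_int as [G [HG0 HG]].
  destruct (key V a b0 delta HV Ha Hb Hd) as [Mr HMr].
  destruct (INR_archimed 1 (Rabs Mr + 1) ltac:(lra)) as [Nr HNr].
  exists (max N0 (max 5 Nr)). intros n Hn2 HnN.
  assert (HnN0 : (N0 <= n)%nat) by lia.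
  assert (Hn5 : (5 <= n)%nat) by lia.
  assert (HnNr : (Nr <= n)%nat) by lia.
  assert (HINR5 : 5 <= INR n) by (replace 5 with (INR 5) by (simpl; ring); apply le_INR; auto).
  assert (HINRr : INR Nr <= INR n) by (apply le_INR; auto).
  pose proof (Rle_abs Mr).
  set (m := INR n - 1).
  assert (Hm4 : 4 <= m) by (unfold m; lra).
  assert (HmMr : Mr <= m) by (unfold m; lra).
  assert (Hs : V + delta <= DeltaY Y n / (INR n - 1)).
  { pose proof (HA n Hn2 HnN0) as Hh. rewrite minus_INR in Hh by lia. simpl (INR 1) in Hh. exact Hh. }
  set (s := DeltaY Y n / (INR n - 1)) in *.
  assert (Hs0 : 0 <= s) by lra.
  destruct (rr_int V b0 m s (a+1)) as [Q [HQ HQb]]; auto; try lra.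
  destruct (rr_int V b0 m s (a+2)) as [Q1 [HQ1 HQ1b]]; auto; try lra.
  assert (HCst : 0 < CstK G V n).
  { unfold CstK, Kc. apply Rmult_lt_0_compat; [apply Rmult_lt_0_compat|apply exp_pos]; auto.
    apply pow_lt. apply Rmult_lt_0_compat; auto; apply exp_pos. }
  assert (HQpos : 0 < Q).
  { pose proof (rr_int_pos V a b0 delta m s HV Ha Hb Hd ltac:(lra) Hs).
    pose proof (HQb (3 * delta / 4) delta ltac:(lra) ltac:(lra)). lra. }
  assert (P1 : imp_int_pos (fun A => 1 * (CstK G V n * rr V b0 m s (a + 1) A)) (CstK G V n * Q)).
  { apply (impP_ext (fun A => CstK G V n * rr V b0 m s (a + 1) A)).
    - intros; ring.
    - apply impP_scal; auto. }
  assert (P2 : imp_int_pos (fun A => / A * (CstK G V n * rr V b0 m s (a + 1) A)) (CstK G V n * Q1)).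
  { apply (impP_ext (fun A => CstK G V n * rr V b0 m s (a + 2) A)).
    - intros x Hx. replace (a + 2) with ((a + 1) + 1) by ring. rewrite rr_succ by auto. ring.
    - apply impP_scal; auto. }
  assert (F1 : forall A mu th, 0 < A -> post_dens V a b0 Y n A mu th = (fun _ => 1) A * post_dens V a b0 Y n A mu th).
  { intros; simpl; ring. }
  assert (F2 : forall A mu th, 0 < A -> (fun A mu th => / A * post_dens V a b0 Y n A mu th) A mu th
                                       = (fun A => / A) A * post_dens V a b0 Y n A mu th).
  { intros; reflexivity. }
  split.
  - exists (CstK G V n * Q), (CstK G V n * Q1). split; [|split].
    + apply Rmult_lt_0_compat; auto.
    + apply (post_int_k G V a b0 Y n (fun _ => 1)); auto; lia.
    + apply (post_int_k G V a b0 Y n (fun A => / A)); auto; lia.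
  - intros Z Z1 HZ HZ1.
    assert (EZ : Z = CstK G V n * Q).
    { apply (post_int_val G V a b0 Y n (fun _ => 1) (post_dens V a b0 Y n)); auto; lia. }
    assert (EZ1 : Z1 = CstK G V n * Q1).
    { apply (post_int_val G V a b0 Y n (fun A => / A) (fun A mu th => / A * post_dens V a b0 Y n A mu th)); auto; lia. }
    subst Z Z1.
    assert (HQQ : Q1 - 2 / delta * Q <= 0).
    { apply Rnot_lt_le. intro Hpos.
      assert (Hdd : 0 < 2 / delta) by (apply Rdiv_lt_0_compat; lra).
      set (eps := (Q1 - 2 / delta * Q) / (2 * (1 + 2 / delta))).
      assert (Heps : 0 < eps) by (unfold eps; apply Rdiv_lt_0_compat; lra).
      destruct (impP_elim _ _ HQ1 eps Heps) as [d1 [Hd1 [M1 HM1]]].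
      destruct (impP_elim _ _ HQ eps Heps) as [d2 [Hd2 [M2 HM2]]].
      set (x := Rmin (Rmin d1 d2) (delta / 2)). set (y := Rmax (Rmax M1 M2) delta).
      assert (Hx0 : 0 < x) by (unfold x; repeat apply Rmin_glb_lt; lra).
      assert (x <= d1) by (unfold x; eapply Rle_trans; [apply Rmin_l|apply Rmin_l]).
      assert (x <= d2) by (unfold x; eapply Rle_trans; [apply Rmin_l|apply Rmin_r]).
      assert (x <= delta / 2) by (unfold x; apply Rmin_r).
      assert (M1 <= y) by (unfold y; eapply Rle_trans; [apply Rmax_l|apply Rmax_l]).
      assert (M2 <= y) by (unfold y; eapply Rle_trans; [apply Rmax_r|apply Rmax_l]).
      assert (delta <= y) by (unfold y; apply Rmax_r).
      assert (A1 := HM1 x y Hx0 ltac:(auto) ltac:(auto) ltac:(lra)).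
      assert (A2 := HM2 x y Hx0 ltac:(auto) ltac:(auto) ltac:(lra)).
      assert (K := HMr m s HmMr ltac:(lra) Hs x y Hx0 ltac:(auto) ltac:(auto)).
      apply Rabs_def2 in A1. apply Rabs_def2 in A2.
      assert (Q1 - 2 / delta * Q < eps + 2 / delta * eps) by nra.
      assert (eps + 2 / delta * eps = (Q1 - 2 / delta * Q) / 2) by (unfold eps; field; lra).
      lra. }
    assert (0 <= CstK G V n * (2 / delta * Q - Q1)) by (apply Rmult_le_pos; lra).
    nra.
Qed.
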